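(* For every normalized Hausdorff moment sequence $\mathbf a=(a_n)_{n\ge0}$ we have $\lim_{n\to\infty}T^{\circ n}(\mathbf a)=\mathbf m$ coordinatewise, i.e. $\lim_{n\to\infty}(T^{\circ n}(\mathbf a))_k=m_k$ for every $k\ge0$. Equivalently, for every probability measure $\tau$ on $[0,1]$, $\widehat T^{\circ n}(\tau)\to\mu$ weakly.
   Context: Let $\mathbf m=(m_n)_{n\ge0}$ be the unique sequence of positive reals with $m_0=1$ and $(1+m_1+\cdots+m_n)\,m_n=1$ for $n\ge1$; it is a Hausdorff moment sequence with representing probability measure $\mu$ on $[0,1]$. A normalized Hausdorff moment sequence is $\mathbf a=(a_n)_n$ with $a_n=\int_0^1t^n\,d\nu(t)$ for a probability measure $\nu$ on $[0,1]$. The map $T$ is $T(\mathbf a)_n=1/(a_0+a_1+\cdots+a_n)$, $n\ge0$; it maps normalized Hausdorff moment sequences to normalized Hausdorff moment sequences, and $\widehat T$ denotes the induced map on probability measures on $[0,1]$. $T^{\circ n}$ is the $n$-fold iterate. *)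

(* Defs.v *)
From HB Require Import structures.
From mathcomp Require Import all_boot all_order all_algebra.
From mathcomp Require Import all_classical all_reals all_analysis.
Set Implicit Arguments. Unset Strict Implicit. Unset Printing Implicit Defensive.
Import Order.TTheory GRing.Theory Num.Theory.
Import numFieldNormedType.Exports.
Local Open Scope classical_set_scope.
Local Open Scope ring_scope.

Definition hmoment (R : realType) (nu : {measure set R -> \bar R}) (n : nat) : R :=
  Rintegral nu `[0, 1] (fun t : R => t ^+ n).

Definition Tmap (R : realType) (a : nat -> R) : nat -> R :=
  fun n => (\sum_(i < n.+1) a i)^-1.

(* Main.v *)
From HB Require Import structures.
From mathcomp Require Import all_boot all_order all_algebra.
From mathcomp Require Import all_classical all_reals all_analysis.
From mathcomp Require Import lra ring.
Require Import Defs.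
Import Order.TTheory GRing.Theory Num.Theory.
Import numFieldNormedType.Exports.
Local Open Scope classical_set_scope.
Local Open Scope ring_scope.

Lemma ev_ex {P : nat -> Prop} : (\forall n \near \oo, P n) -> exists N, forall n, (N <= n)%N -> P n.
Proof. by case=> N _ HN; exists N => n hn; apply: HN. Qed.

Lemma ex_ev {P : nat -> Prop} : (exists N, forall n, (N <= n)%N -> P n) -> \forall n \near \oo, P n.
Proof. by case=> N HN; exists N => // n hn; apply: HN. Qed.

Lemma contr (R : realType) (e d : nat -> R) (q : R) : 0 <= q -> q < 1 ->
  (forall n, 0 <= e n) -> d @ \oo --> 0 ->
  (forall n, e n.+1 <= q * (e n + d n)) -> e @ \oo --> 0.
Proof.
move=> q0 q1 e0 dc he.
apply/cvgrPdist_lt => eps eps0.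
set c := eps / 2.
have c0 : 0 < c by rewrite /c divr_gt0.
have dl : 0 < c * (1 - q) by rewrite mulr_gt0 // subr_gt0.
have [N HN] := ev_ex ((cvgrPdist_lt _ _).1 dc _ dl).
have key : forall j, e (N + j)%N - c <= q ^+ j * e N.
  elim=> [|j IH]; first by rewrite addn0 expr0 mul1r lerBlDr lerDl ltW.
  rewrite addnS.
  have hd := HN (N + j)%N (leq_addr _ _).
  rewrite sub0r normrN in hd.
  have hd' : d (N + j)%N <= c * (1 - q) by apply: le_trans (ler_norm _) (ltW hd).
  have h1 := he (N + j)%N.
  have h2 : e (N + j)%N.+1 - c <= q * (e (N+j)%N - c).
    apply: le_trans (lerB h1 (lexx c)) _.
    have h3 : q * d (N + j)%N <= q * (c * (1 - q)) by apply: ler_wpM2l.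
    have h4 : q * (c * (1 - q)) <= c * (1 - q) by apply: ler_piMl; apply: ltW.
    nra.
  apply: le_trans h2 _; rewrite exprS -mulrA; exact: ler_wpM2l.
have gc : (fun j => q ^+ j * e N) @ \oo --> 0.
  rewrite -(mul0r (e N)); apply: cvgMl; apply: cvg_expr; rewrite ger0_norm //.
have [M HM] := ev_ex ((cvgrPdist_lt _ _).1 gc _ c0).
apply: ex_ev; exists (N + M)%N => n hn.
have hNn : (N <= n)%N by apply: leq_trans hn; exact: leq_addr.
have := key (n - N)%N; rewrite subnKC //.
have := HM (n - N)%N; rewrite leq_subRL // => /(_ hn).
rewrite sub0r normrN ger0_norm; last by rewrite mulr_ge0 ?exprn_ge0.
move=> h1 h2.
rewrite sub0r normrN ger0_norm ?e0 //.
have : eps = c + c by rewrite /c -splitr.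
lra.
Qed.

Lemma cvg_dist0 (R : realType) (u : nat -> R) (l : R) :
  (fun n => `|u n - l|) @ \oo --> 0 -> u @ \oo --> l.
Proof.
move=> h; apply/cvgrPdist_lt => eps ep.
have [N HN] := ev_ex ((cvgrPdist_lt _ _).1 h _ ep); apply: ex_ev; exists N => n /HN.
by rewrite sub0r normrN normr_id distrC.
Qed.

Lemma cvg_dist0' (R : realType) (u : nat -> R) (l : R) :
  u @ \oo --> l -> (fun n => `|u n - l|) @ \oo --> 0.
Proof.
move=> h; apply/cvgrPdist_lt => eps ep.
have [N HN] := ev_ex ((cvgrPdist_lt _ _).1 h _ ep); apply: ex_ev; exists N => n /HN.
by rewrite sub0r normrN normr_id distrC.
Qed.

Lemma sum_ge1 (R : realType) (b : nat -> R) k : b 0%N = 1 -> (forall i, 0 <= b i) ->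
  1 <= \sum_(i < k.+1) b i.
Proof.
move=> b0 bp; rewrite big_ord_recl /= b0 lerDl.
by rewrite sumr_ge0.
Qed.

Theorem theorem2p3 (R : realType) (m : nat -> R)
  (m0 : m 0%N = 1)
  (mpos : forall n, 0 < m n)
  (mrec : forall n, (1 <= n)%N -> (\sum_(i < n.+1) m i) * m n = 1)
  (nu : probability R R)
  (nu01 : nu `[0, 1]%classic = 1%E) :
  forall k : nat,
    (fun n : nat => iter n (@Tmap R) (hmoment nu) k) @ \oo --> m k.
Proof.
set a := hmoment nu.
have a0 : a 0%N = 1.
  rewrite /a /hmoment.
  have -> : Rintegral nu `[0, 1]%classic (fun t : R => t ^+ 0) = Rintegral nu `[0, 1]%classic (fun=> 1).
    by apply: eq_Rintegral => t _; rewrite expr0.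
  rewrite Rintegral_cst; last exact: measurable_itv.
  by rewrite mul1r; exact: (congr1 fine nu01).
have ap : forall i, 0 <= a i.
  move=> i; rewrite /a /hmoment; apply: Rintegral_ge0 => t.
  rewrite /= in_itv /= => /andP[t0 _]; exact: exprn_ge0.
set x := fun n => iter n (@Tmap R) a.
have xS : forall n i, x n.+1 i = Tmap (x n) i by [].
have inv : forall n, x n 0%N = 1 /\ forall i, 0 <= x n i.
  elim=> [|n [IH0 IHp]]; first by split.
  split; first by rewrite xS /Tmap big_ord1 IH0 invr1.
  move=> i; rewrite xS /Tmap invr_ge0; apply: sumr_ge0 => j _; exact: IHp.
have sm1 : forall k, 1 <= \sum_(i < k.+1) m i.
  by move=> k; apply: sum_ge1 => // i; apply: ltW.
suff H : forall k, (fun n => x n k) @ \oo --> m k /\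
   (fun n => \sum_(i < k.+1) x n i) @ \oo --> \sum_(i < k.+1) m i.
  by move=> k; exact: (H k).1.
elim=> [|k [_ IHs]].
  have E : (fun n => x n 0%N) = fun=> 1 by apply: funext => n; rewrite (inv n).1.
  have E' : (fun n => \sum_(i < 1) x n i) = fun=> 1.
    by apply: funext => n; rewrite big_ord1 (inv n).1.
  by rewrite E E' big_ord1 m0; split; apply: cvg_cst.
set s := \sum_(i < k.+1) m i.
set mm := m k.+1.
have hm : (s + mm) * mm = 1.
  by have := mrec k.+1 isT; rewrite big_ord_recr /=.
have mm0 := mpos k.+1.
have s1 : 1 <= s by exact: sm1.
have mm1 : mm < 1 by nra.
have Hy : (fun n => x n k.+1) @ \oo --> mm.
  apply: cvg_dist0.
  apply: (@contr R _ (fun n => `|\sum_(i < k.+1) x n i - s|) mm (ltW mm0) mm1).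
  - by move=> n; exact: normr_ge0.
  - exact: cvg_dist0'.
  move=> n.
  set sn := \sum_(i < k.+1) x n i.
  set y := x n k.+1.
  have -> : x n.+1 k.+1 = (sn + y)^-1 by rewrite xS /Tmap big_ord_recr.
  have sn1 : 1 <= sn by apply: sum_ge1; [exact: (inv n).1 | exact: (inv n).2].
  have y0 : 0 <= y by exact: (inv n).2.
  have A0 : sn + y != 0 by apply: lt0r_neq0; lra.
  have eq : (sn + y)^-1 - mm = (sn + y)^-1 * (mm * (s - sn + (mm - y))).
    have -> : (sn + y)^-1 * (mm * (s - sn + (mm - y))) =
      (sn + y)^-1 * ((s + mm) * mm) - ((sn + y)^-1 * (sn + y)) * mm by ring.
    by rewrite hm mulVf // mulr1 mul1r.
  rewrite eq normrM.
  have iA : 0 <= `|(sn + y)^-1| <= 1.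
    rewrite normr_ge0 /= ger0_norm ?invr_ge0; last by lra.
    by rewrite invf_le1 //; lra.
  have T1 : `|mm * (s - sn + (mm - y))| <= mm * (`|y - mm| + `|sn - s|).
    rewrite normrM gtr0_norm //; apply: ler_wpM2l; first exact: ltW.
    rewrite addrC; apply: le_trans (ler_normD _ _) _.
    by rewrite distrC [`|s - sn|]distrC.
  have T0 : 0 <= `|mm * (s - sn + (mm - y))| by exact: normr_ge0.
  case/andP: iA => iA0 iA1.
  have : `|(sn + y)^-1| * `|mm * (s - sn + (mm - y))| <= `|mm * (s - sn + (mm - y))|
    by apply: ler_piMl.
  lra.
split=> //.
have E : (fun n => \sum_(i < k.+2) x n i) = fun n => \sum_(i < k.+1) x n i + x n k.+1.
  by apply: funext => n; rewrite big_ord_recr.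
by rewrite E big_ord_recr /=; apply: cvgD.
Qed.
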